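(* Let $q$ be a prime power and $m,n$ positive integers. Let $\alpha,\beta\in\mathbb{F}_{q^2}^*$ be distinct with $\alpha^{q+1}=\beta^{q+1}=1$, and let $\varepsilon\in\mathbb{F}_{q^2}^*$. Then $$f(x)=(x+\alpha x^q)^m+\varepsilon(x+\beta x^q)^n$$ is a permutation polynomial of $\mathbb{F}_{q^2}$ if and only if $\gcd(mn,q-1)=1$ and $\varepsilon^{q-1}\alpha^m\neq\beta^n$.
   Context: A polynomial is a permutation polynomial of $\mathbb{F}_{q^2}$ if the map it induces on $\mathbb{F}_{q^2}$ is bijective. *)

(* Defs.v *)
From HB Require Import structures.
From mathcomp Require Import all_boot all_order all_algebra all_field.
Set Implicit Arguments. Unset Strict Implicit. Unset Printing Implicit Defensive.
Import GRing.Theory.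
Local Open Scope ring_scope.

Definition prime_power (q : nat) : Prop :=
  exists p k : nat, prime p /\ (0 < k)%N /\ q = (p ^ k)%N.

Definition is_perm_poly (F : finFieldType) (f : {poly F}) : Prop :=
  bijective (fun x : F => f.[x]).

(* Main.v *)
Set Warnings "-notation-overridden,-ambiguous-paths,-deprecated".
From HB Require Import structures.
From mathcomp Require Import all_boot all_order all_algebra all_field.
From mathcomp Require Import zify ring cyclic.
Require Import Defs.
Import GRing.Theory.
Set Implicit Arguments. Unset Strict Implicit.
Local Open Scope ring_scope.

Lemma evalf (F : finFieldType) (q m n : nat) (alpha beta eps x : F) :
  (('X + alpha *: 'X^q) ^+ m + eps *: ('X + beta *: 'X^q) ^+ n).[x]
  = (x + alpha * x ^+ q) ^+ m + eps * (x + beta * x ^+ q) ^+ n.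
Proof. by rewrite !hornerE. Qed.

Section S.
Variables (F : finFieldType) (q : nat).
Hypothesis hq2 : (1 < q)%N.
Hypothesis hF : #|F| = (q ^ 2)%N.
Hypothesis frobD : forall x y : F, (x + y) ^+ q = x ^+ q + y ^+ q.

Lemma frobK (x : F) : (x ^+ q) ^+ q = x.
Proof. by rewrite -exprM -[(q * q)%N]/(q ^ 2)%N -hF expf_card. Qed.

Lemma frob0 : (0 : F) ^+ q = 0.
Proof. by rewrite expr0n; case: q hq2. Qed.

Lemma frobN (x : F) : (- x) ^+ q = - x ^+ q.
Proof.
apply/eqP; rewrite -subr_eq0 opprK addrC -frobD.
by rewrite addrN frob0.
Qed.

Lemma frobB (x y : F) : (x - y) ^+ q = x ^+ q - y ^+ q.
Proof. by rewrite frobD frobN. Qed.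

Lemma not_all_fixed : ~ (forall y : F, y ^+ q = y).
Proof.
move=> H.
have sz : size ('X^q - 'X : {poly F}) = q.+1.
  rewrite size_addl ?size_polyXn // size_opp size_polyX; by case: q hq2 => [|[]].
have := @roots_geq_poly_eq0 F ('X^q - 'X) (enum F).
rewrite enum_uniq sz -cardE hF.
have -> : all (root ('X^q - 'X)) (enum F).
  by apply/allP => y _; rewrite rootE !hornerE H subrr.
move=> /(_ isT isT).
have -> : (q.+1 <= q ^ 2)%N by rewrite expnS expn1; nia.
by move=> /(_ isT) /eqP; rewrite -size_poly_eq0 sz.
Qed.

Lemma notall (c : F) : ~ (forall y : F, c * y ^+ q = y).
Proof.
move=> H; have c1 : c = 1 by have := H 1; rewrite expr1n mulr1.
by apply: not_all_fixed => y; rewrite -{2}(H y) c1 mul1r.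
Qed.

Lemma fixed_unit (w : F) : w ^+ q = w -> w != 0 -> w ^+ (q - 1) = 1.
Proof.
move=> Hw w0; apply: (mulIf w0); rewrite mul1r -exprSr subn1 prednK //.
by case: q hq2.
Qed.

Lemma fix_coprime (m : nat) (w : F) : coprime m (q - 1) -> (0 < m)%N ->
  w ^+ q = w -> w ^+ m = 1 -> w = 1.
Proof.
move=> cop m0 Hq Hm.
have [w0'|w0] := eqVneq w 0.
  by move: Hm; rewrite w0' expr0n eqn0Ngt m0 /= => /eqP; rewrite eq_sym oner_eq0.
have H1 := fixed_unit Hq w0.
have [a _ /dvdnP [k Hk]] := Bezoutl (q - 1) m0.
move: cop; rewrite /coprime => /eqP g1; rewrite g1 in Hk.
have : w ^+ (1 + a * (q - 1)) = w ^+ (k * m) by rewrite Hk.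
rewrite exprD expr1 mulnC exprM H1 expr1n mulr1 mulnC exprM Hm expr1n; exact.
Qed.

Lemma line_inter (a b y : F) : a != b -> a * y ^+ q = y -> b * y ^+ q = y -> y = 0.
Proof.
move=> ab Ha Hb.
have : (a - b) * y ^+ q = 0 by rewrite mulrBl Ha Hb subrr.
move/eqP; rewrite mulf_eq0 subr_eq0 (negbTE ab) /= expf_eq0 => /andP[_ /eqP //].
Qed.

Lemma lineL (a x : F) : a ^+ q.+1 = 1 -> a * (x + a * x ^+ q) ^+ q = x + a * x ^+ q.
Proof.
move=> Ha; rewrite frobD exprMn frobK mulrDr mulrA -exprS Ha mul1r addrC //.
Qed.

Lemma lineX (a u : F) k : a * u ^+ q = u -> a ^+ k * (u ^+ k) ^+ q = u ^+ k.
Proof. by move=> H; rewrite -exprM mulnC exprM -exprMn H. Qed.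

Lemma lineB (a u v : F) : a * u ^+ q = u -> a * v ^+ q = v -> a * (u - v) ^+ q = u - v.
Proof. by move=> Hu Hv; rewrite frobB mulrBr Hu Hv. Qed.

Lemma line_eps (c e w : F) : e != 0 -> c * w ^+ q = w ->
  (c / e ^+ (q - 1)) * (e * w) ^+ q = e * w.
Proof.
move=> e0 H.
have eq : e ^+ q = e ^+ (q - 1) * e by rewrite -exprSr subn1 prednK //; case: q hq2.
rewrite exprMn eq -{2}H.
have e1 : e ^+ (q - 1) != 0 by rewrite expf_neq0.
by field.
Qed.

Lemma L_ker (a b d : F) : a != b -> d + a * d ^+ q = 0 -> d + b * d ^+ q = 0 -> d = 0.
Proof.
move=> ab Ha Hb.
have : (a - b) * d ^+ q = 0.
  have -> : (a - b) * d ^+ q = (d + a * d ^+ q) - (d + b * d ^+ q) by ring.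
  by rewrite Ha Hb subrr.
move/eqP; rewrite mulf_eq0 subr_eq0 (negbTE ab) /= expf_eq0 => /andP[_ /eqP //].
Qed.


Lemma lineD (a u v : F) : a * u ^+ q = u -> a * v ^+ q = v -> a * (u + v) ^+ q = u + v.
Proof. by move=> Hu Hv; rewrite frobD mulrDr Hu Hv. Qed.

Lemma pow_inj (a u u' : F) (k : nat) : (0 < k)%N -> coprime k (q - 1) -> a != 0 ->
  a * u ^+ q = u -> a * u' ^+ q = u' -> u ^+ k = u' ^+ k -> u = u'.
Proof.
move=> k0 cop a0 Hu Hu' Hk.
have [u0|u0] := eqVneq u' 0.
  by move: Hk; rewrite u0 expr0n eqn0Ngt k0 /= => /eqP; rewrite expf_eq0 k0 /= => /eqP.
apply: divr1_eq; apply: (fix_coprime cop k0).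
  have eu : u ^+ q = a^-1 * u by rewrite -{2}Hu mulKf.
  have eu' : u' ^+ q = a^-1 * u' by rewrite -{2}Hu' mulKf.
  rewrite exprMn exprVn eu eu'; field; rewrite u0 a0 //.
by rewrite exprMn exprVn Hk divff // expf_neq0.
Qed.

Lemma Lsub (a x y : F) : (x - y) + a * (x - y) ^+ q = (x + a * x ^+ q) - (y + a * y ^+ q).
Proof. rewrite frobB; ring. Qed.

Lemma Lscale (a w x : F) : w ^+ q = w -> (w * x) + a * (w * x) ^+ q = w * (x + a * x ^+ q).
Proof. move=> Hw; rewrite exprMn Hw; ring. Qed.

Lemma ker_ex (b : F) : b ^+ q.+1 = 1 -> exists x0 : F, x0 != 0 /\ x0 + b * x0 ^+ q = 0.
Proof.
move=> Hb.
case: (boolP [exists x : F, (x != 0) && (x + b * x ^+ q == 0)]).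
  by move=> /existsP [x /andP [x0 /eqP hx]]; exists x.
move=> /existsPn H; exfalso.
have inj : injective (fun x : F => x + b * x ^+ q).
  move=> x y /= hxy; apply/eqP; rewrite -subr_eq0; apply/negPn/negP => nz.
  by have := H (x - y); rewrite nz Lsub hxy subrr eqxx.
have [g fg gf] := injF_bij inj.
apply: (notall (c:=b)) => y; rewrite -(gf y); exact: lineL.
Qed.

Lemma w_ex (d : nat) : (1 < d)%N -> (d %| q - 1)%N ->
  exists w : F, [/\ w ^+ q = w, w ^+ d = 1 & w != 1].
Proof.
move=> d1 dq.
pose N := #|F|.-1.
have N0 : (0 < N)%N by rewrite /N hF; nia.
have hN : N = ((q - 1) * (q + 1))%N by rewrite /N hF; nia.
have : has N.-primitive_root (enum (predC1 (0 : F))).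
  apply: has_prim_root => //.
  - apply/allP => x; rewrite mem_enum /= => x0; rewrite unity_rootE; apply/eqP.
    by apply: (mulIf x0); rewrite mul1r -exprSr /N prednK ?expf_card // hF; nia.
  - exact: enum_uniq.
  - by rewrite -cardE cardC1.
move=> /hasP [z _ pz].
have dN : (d %| N)%N by rewrite hN dvdn_mulr.
exists (z ^+ (N %/ d)); split.
- have : (z ^+ (N %/ d)) ^+ (q - 1) = 1.
    move: dq => /dvdnP [k ->]; rewrite -exprM (mulnC k d) mulnA divnK // exprM.
    by rewrite (prim_expr_order pz) expr1n.
  by move=> h; rewrite -{1}(subnK (ltnW hq2)) addn1 exprSr h mul1r.
- by rewrite -exprM divnK // (prim_expr_order pz).
- rewrite -(expr0 z) (eq_prim_root_expr pz) mod0n modn_small ?ltn_Pdiv //.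
  by rewrite -lt0n divn_gt0 ?(ltnW d1) // dvdn_leq.
Qed.

Lemma cop_nec (a b e : F) (k l : nat) : a ^+ q.+1 = 1 -> b ^+ q.+1 = 1 -> a != b ->
  (0 < l)%N ->
  injective (fun x => (x + a * x ^+ q) ^+ k + e * (x + b * x ^+ q) ^+ l) ->
  coprime k (q - 1).
Proof.
move=> Ha Hb ab l0 inj.
have [x0 [x00 hx0]] := ker_ex Hb.
have u0 : x0 + a * x0 ^+ q != 0.
  by apply/eqP => h; move: x00; rewrite (L_ker ab h hx0) eqxx.
apply/negPn/negP => nc.
pose d := gcdn k (q - 1).
have d1 : (1 < d)%N.
  have : (0 < d)%N by rewrite gcdn_gt0; apply/orP; right; rewrite subn_gt0.
  by move: nc; rewrite /coprime -/d; case: d => [|[]].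
have [w [Hw wd w1]] := w_ex d1 (dvdn_gcdr _ _).
have wk : w ^+ k = 1.
  by move: (dvdn_gcdl k (q - 1)) => /dvdnP [j ->]; rewrite mulnC exprM wd expr1n.
have := inj (w * x0) x0; rewrite /= !Lscale // hx0 mulr0 exprMn wk mul1r.
move=> /(_ erefl) /eqP; rewrite -{2}(mul1r x0) (inj_eq (mulIf x00)) => /eqP.
by move/eqP: w1.
Qed.


Lemma f_inj (alpha beta eps : F) (m n : nat) : (0 < m)%N -> (0 < n)%N ->
  alpha != 0 -> beta != 0 -> alpha != beta -> alpha ^+ q.+1 = 1 -> beta ^+ q.+1 = 1 ->
  eps != 0 -> coprime m (q - 1) -> coprime n (q - 1) ->
  eps ^+ (q - 1) * alpha ^+ m != beta ^+ n ->
  injective (fun x => (x + alpha * x ^+ q) ^+ m + eps * (x + beta * x ^+ q) ^+ n).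
Proof.
move=> hm hn ha0 hb0 hab ha1 hb1 he0 cm cn hc x y /=.
set u := x + alpha * x ^+ q; set u' := y + alpha * y ^+ q.
set v := x + beta * x ^+ q; set v' := y + beta * y ^+ q.
move=> fxy.
have Lu : alpha * u ^+ q = u by apply: lineL.
have Lu' : alpha * u' ^+ q = u' by apply: lineL.
have Lv : beta * v ^+ q = v by apply: lineL.
have Lv' : beta * v' ^+ q = v' by apply: lineL.
pose c2 := beta ^+ n / eps ^+ (q - 1).
have e1 : eps ^+ (q - 1) != 0 by rewrite expf_neq0.
have c12 : alpha ^+ m != c2 by apply: contra hc => /eqP ->; rewrite /c2 mulrC divfK.
have hd : u ^+ m - u' ^+ m = eps * v' ^+ n - eps * v ^+ n.
  have -> : u ^+ m - u' ^+ m = (u ^+ m + eps * v ^+ n) - (u' ^+ m + eps * v ^+ n) by ring.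
  rewrite fxy; ring.
have d1 : alpha ^+ m * (u ^+ m - u' ^+ m) ^+ q = u ^+ m - u' ^+ m.
  by apply: lineB; apply: lineX.
have d2 : c2 * (u ^+ m - u' ^+ m) ^+ q = u ^+ m - u' ^+ m.
  by rewrite hd; apply: lineB; apply: line_eps => //; apply: lineX.
have d0 := line_inter c12 d1 d2.
have um : u ^+ m = u' ^+ m by apply: subr0_eq.
have vn : v ^+ n = v' ^+ n.
  by apply: (mulfI he0); apply/esym/subr0_eq; rewrite -hd d0.
have uu := pow_inj hm cm ha0 Lu Lu' um.
have vv := pow_inj hn cn hb0 Lv Lv' vn.
apply/eqP; rewrite -subr_eq0; apply/eqP; apply: (L_ker hab).
  by rewrite Lsub -/u -/u' uu subrr.
by rewrite Lsub -/v -/v' vv subrr.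
Qed.

Lemma cond_nec (alpha beta eps : F) (m n : nat) :
  alpha ^+ q.+1 = 1 -> beta ^+ q.+1 = 1 -> eps != 0 ->
  bijective (fun x => (x + alpha * x ^+ q) ^+ m + eps * (x + beta * x ^+ q) ^+ n) ->
  eps ^+ (q - 1) * alpha ^+ m != beta ^+ n.
Proof.
move=> ha1 hb1 he0 [g fg gf]; apply/eqP => H.
have e1 : eps ^+ (q - 1) != 0 by rewrite expf_neq0.
apply: (notall (c := alpha ^+ m)) => y; rewrite -(gf y).
apply: lineD; first by apply: lineX; apply: lineL.
have -> : alpha ^+ m = beta ^+ n / eps ^+ (q - 1) by rewrite -H; field.
by apply: line_eps => //; apply: lineX; apply: lineL.
Qed.

End S.

Theorem proposition3p1 (q m n : nat) (F : finFieldType)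
  (hq : prime_power q) (hF : #|F| = (q ^ 2)%N)
  (hm : (0 < m)%N) (hn : (0 < n)%N)
  (alpha beta eps : F)
  (ha0 : alpha != 0) (hb0 : beta != 0) (hab : alpha != beta)
  (ha1 : alpha ^+ q.+1 = 1) (hb1 : beta ^+ q.+1 = 1)
  (he0 : eps != 0) :
  is_perm_poly (('X + alpha *: 'X^q) ^+ m + eps *: ('X + beta *: 'X^q) ^+ n)
  <-> (gcdn (m * n) (q - 1) = 1)%N /\ eps ^+ (q - 1) * alpha ^+ m != beta ^+ n.
Proof.
have [p [k [pp [k0 qE]]]] := hq.
have hq2 : (1 < q)%N.
  have p1 := prime_gt1 pp.
  have e : q = (p * p ^ k.-1)%N by rewrite qE -expnS prednK.
  have := expn_gt0 p k.-1; rewrite (ltnW p1) /= => h; rewrite e; nia.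
have pc : p \in [pchar F].
  by apply: (card_finPcharP (n := (k * 2)%N)) => //; rewrite hF qE expnM.
have frobD : forall x y : F, (x + y) ^+ q = x ^+ q + y ^+ q.
  move=> x y; apply: exprDn_pchar.
  by rewrite (eq_pnat _ (pcharf_eq pc)) qE pnatX pnat_id.
rewrite /is_perm_poly.
pose g := fun x : F => (x + alpha * x ^+ q) ^+ m + eps * (x + beta * x ^+ q) ^+ n.
have Eg : (fun x : F => (('X + alpha *: 'X^q) ^+ m + eps *: ('X + beta *: 'X^q) ^+ n).[x]) =1 g.
  by move=> x; rewrite /g evalf.
split.
- move=> B; have Bg := eq_bij B Eg.
  have inj := bij_inj Bg.
  have cm := cop_nec hq2 hF frobD ha1 hb1 hab hn inj.
  have inj' : injective (fun x => (x + beta * x ^+ q) ^+ n + eps^-1 * (x + alpha * x ^+ q) ^+ m).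
    have E z : g z = eps * ((z + beta * z ^+ q) ^+ n + eps^-1 * (z + alpha * z ^+ q) ^+ m).
      by rewrite /g mulrDr mulrA mulfV // mul1r addrC.
    move=> x y /= h; apply: inj; rewrite /= -/(g x) -/(g y) !E h //.
  have ba : beta != alpha by rewrite eq_sym.
  have cn := cop_nec hq2 hF frobD hb1 ha1 ba hm inj'.
  split; [|exact: (cond_nec hq2 hF frobD ha1 hb1 he0 Bg)].
  have : coprime (m * n) (q - 1) by rewrite coprimeMl cm cn.
  by move/eqP.
- move=> [g1 hc].
  have : coprime (m * n) (q - 1) by rewrite /coprime g1.
  rewrite coprimeMl => /andP [cm cn].
  have inj := f_inj hq2 hF frobD hm hn ha0 hb0 hab ha1 hb1 he0 cm cn hc.
  apply: (eq_bij (f := g)); first exact: injF_bij.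
  by move=> x; rewrite Eg.
Qed.
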